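(* Let $A\subseteq\mathbb{Z}^n$ be finite, $k\in\mathbb{N}$ and $f\in\mathbb{R}[t_1^{\pm1},\dots,t_n^{\pm1}]_{k\cdot A}$. The following are equivalent: (ii) $f$ is strictly $A$-copositive; (iii) $f^{k\cdot(F\cap A)}(t)>0$ for all $t\in\mathbb{R}^n_{>0}$ and all nonempty faces $F$ of $\operatorname{conv}(A)$; (iv) $f^G(t)>0$ for all $t\in\mathbb{R}^n_{>0}$ and all nonempty faces $G$ of $\operatorname{conv}(k\cdot A)$.
   Context: Notation: $A=\{a_1,\dots,a_m\}$, $k\cdot A=\{\sum_j v_ja_j: v_j\in\mathbb{N},\sum_jv_j=k\}$, and $\mathbb{R}[t^{\pm1}]_S$ is the space of Laurent polynomials with support in $S$. For $f=\sum_b c_bt^b$ and $S\subseteq\mathbb{R}^n$, the truncation is $f^S=\sum_{b\in S\cap\mathbb{Z}^n}c_bt^b$. Let $Y_{\hat A}\subseteq\mathbb{C}^m$ be the Zariski closure of the image of $(u,t)\mapsto(ut^{a_1},\dots,ut^{a_m})$ on $(\mathbb{C}^* )^{n+1}$ and $(Y_{\hat A})_{\ge0}=Y_{\hat A}\cap\mathbb{R}^m_{\ge0}$. For $f=\sum_{b\in k\cdot A}c_bt^b$ choose $v_{jb}\in\mathbb{N}$ with $\sum_jv_{jb}=k$, $b=\sum_jv_{jb}a_j$, and let $\hat f(y)=\sum_bc_b\prod_jy_j^{v_{jb}}$ (its values on $Y_{\hat A}$ are independent of the choice). $f$ is strictly $A$-copositive if $\hat f>0$ on $(Y_{\hat A})_{\ge0}\setminus\{0\}$.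 *)

(* Defs.v *)
From HB Require Import structures.
From mathcomp Require Import all_boot all_order all_algebra.
From mathcomp Require Import boolp classical_sets reals.
From mathcomp Require Import complex.
From mathcomp Require mpoly.

Set Implicit Arguments.
Unset Strict Implicit.
Unset Printing Implicit Defensive.

Import Order.TTheory GRing.Theory Num.Theory.
Local Open Scope ring_scope.
Local Open Scope classical_set_scope.

Section Defs.
Variables (R : realType) (n m : nat).

Definition toR (b : 'rV[int]_n) : 'rV[R]_n := map_mx (fun z : int => z%:~R) b.

Definition dotR (w x : 'rV[R]_n) : R := \sum_(i < n) w 0 i * x 0 i.

Definition conv (S : set 'rV[R]_n) : set 'rV[R]_n :=
  [set x | exists (p : nat) (q : 'I_p -> 'rV[R]_n) (l : 'I_p -> R),
     [/\ forall i, S (q i), forall i, 0 <= l i, \sum_(i < p) l i = 1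
       & x = \sum_(i < p) l i *: q i]].

(* F is a face of the convex set P (intersection with a supporting hyperplane;
   w = 0, h = 0 gives P itself). *)
Definition face (P F : set 'rV[R]_n) : Prop :=
  exists (w : 'rV[R]_n) (h : R),
    (forall x, P x -> dotR w x <= h) /\ F = [set x | P x /\ dotR w x = h].

(* The point set A = {a_1, ..., a_m} is given by a : 'I_m -> Z^n. *)
Variable a : 'I_m -> 'rV[int]_n.

(* k.(S cap A) = { sum_j v_j a_j : v_j in N, sum_j v_j = k, v_j > 0 -> a_j in S }.
   With S = setT this is k.A. *)
Definition kdil (S : set 'rV[int]_n) (k : nat) : set 'rV[int]_n :=
  [set b | exists v : 'I_m -> nat,
     [/\ \sum_(j < m) v j = k, (forall j, (0 < v j)%N -> S (a j))
       & b = \sum_(j < m) (v j)%:Z *: a j]].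

(* Duplicate-free enumeration of k.A (all v_j <= k automatically). *)
Definition kA_seq (k : nat) : seq 'rV[int]_n :=
  undup (map (fun v : {ffun 'I_m -> 'I_k.+1} => \sum_(j < m) ((v j : nat)%:Z *: a j))
    (filter (fun v : {ffun 'I_m -> 'I_k.+1} => (\sum_(j < m) (v j : nat) == k)%N)
       (enum {ffun 'I_m -> 'I_k.+1}))).

Definition mono (b : 'rV[int]_n) (t : 'rV[R]_n) : R := \prod_(i < n) t 0 i ^ b 0 i.

(* A Laurent polynomial f in R[t^{+-1}]_{k.A} is given by its coefficient map c,
   which vanishes outside k.A.  Its truncation to S (a subset of Z^n): *)
Definition trunc (k : nat) (c : 'rV[int]_n -> R) (S : set 'rV[int]_n)
  (t : 'rV[R]_n) : R :=
  \sum_(b <- kA_seq k | b \in S) c b * mono b t.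

(* Y_{hat A}: Zariski closure in C^m of the image of
   (u,t) |-> (u t^{a_1}, ..., u t^{a_m}) on (C^* )^{n+1}. *)
Definition inY (y : 'I_m -> R[i]) : Prop :=
  forall p : mpoly.mpoly m R[i],
    (forall (u : R[i]) (t : 'I_n -> R[i]), u != 0 -> (forall i, t i != 0) ->
       mpoly.meval (fun j => u * \prod_(i < n) t i ^ (a j 0 i)) p = 0) ->
    mpoly.meval y p = 0.

Definition rep_choice (k : nat) (v : 'rV[int]_n -> 'I_m -> nat) : Prop :=
  forall b, kdil setT k b ->
    \sum_(j < m) v b j = k /\ b = \sum_(j < m) (v b j)%:Z *: a j.

Definition fhat (k : nat) (c : 'rV[int]_n -> R) (v : 'rV[int]_n -> 'I_m -> nat)
  (y : 'I_m -> R) : R :=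
  \sum_(b <- kA_seq k) c b * \prod_(j < m) y j ^+ v b j.

Definition strictly_copositive (k : nat) (c : 'rV[int]_n -> R) : Prop :=
  forall y : 'I_m -> R, (forall j, 0 <= y j) -> (exists j, y j != 0) ->
    inY (fun j => ((y j)%:C)%C) ->
    forall v, rep_choice k v -> 0 < fhat k c v y.

End Defs.

(* Main.v *)
Require Import Defs.
From HB Require Import structures.
From mathcomp Require Import all_boot all_order all_algebra.
From mathcomp Require Import boolp classical_sets reals.
From mathcomp Require Import complex.
From mathcomp Require mpoly.
From mathcomp Require Import ring lra.
Set Implicit Arguments.
Unset Strict Implicit.
Unset Printing Implicit Defensive.
Import Order.TTheory GRing.Theory Num.Theory.
Local Open Scope ring_scope.

Section Motzkin.
Variable F : realFieldType.

Lemma fin_argmax (I : finType) (P : pred I) (f : I -> F) i0 :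
  P i0 -> exists2 j, P j & forall i, P i -> f i <= f j.
Proof.
move=> Pi0; case: (@arg_maxP _ F I i0 P f Pi0) => j Pj Hj.
by exists j => // i /Hj.
Qed.

Lemma sum_ge_term (I : finType) (f : I -> F) j :
  (forall i, 0 <= f i) -> f j <= \sum_i f i.
Proof.
move=> H; rewrite (bigD1 j) //= lerDl; apply: sumr_ge0 => i _; exact: H.
Qed.

Lemma fm_step (I : finType) (r c : I -> F) (J : pred I) :
  (forall i, c i = 0 -> 0 <= r i /\ (J i -> 0 < r i)) ->
  (forall p q, 0 < c p -> c q < 0 ->
     0 <= (- c q) * r p + c p * r q /\
     (J p || J q -> 0 < (- c q) * r p + c p * r q)) ->
  exists z, forall i, 0 <= r i + c i * z /\ (J i -> 0 < r i + c i * z).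
Proof.
move=> H0 Hpq.
pose lo p := - r p / c p.
have E1 p z : 0 < c p -> r p + c p * z = c p * (z - lo p).
  by move=> cp; rewrite /lo; field; rewrite gt_eqF.
have E2 q z : c q < 0 -> r q + c q * z = (- c q) * (lo q - z).
  by move=> cq; rewrite /lo; field; rewrite lt_eqF.
have E3 p q : 0 < c p -> c q < 0 ->
    (- c q) * r p + c p * r q = (c p * - c q) * (lo q - lo p).
  by move=> cp cq; rewrite /lo; field; do ?split; rewrite ?(gt_eqF cp) ?(lt_eqF cq).
have P3 p q : 0 < c p -> c q < 0 ->
    lo p <= lo q /\ (J p || J q -> lo p < lo q).
  move=> cp cq; have [A B] := Hpq p q cp cq.
  have pos : 0 < c p * - c q by rewrite mulr_gt0 // oppr_gt0.
  rewrite E3 // in A B; split.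
    by rewrite -subr_ge0 -(pmulr_rge0 _ pos).
  by move=> /B; rewrite pmulr_rgt0 // subr_gt0.
have goodp z p : 0 < c p -> lo p <= z -> (J p -> lo p < z) ->
    0 <= r p + c p * z /\ (J p -> 0 < r p + c p * z).
  move=> cp h1 h2; rewrite E1 //; split.
    by rewrite pmulr_rge0 // subr_ge0.
  by move=> /h2 h; rewrite pmulr_rgt0 // subr_gt0.
have goodq z q : c q < 0 -> z <= lo q -> (J q -> z < lo q) ->
    0 <= r q + c q * z /\ (J q -> 0 < r q + c q * z).
  move=> cq h1 h2; have cq' : 0 < - c q by rewrite oppr_gt0.
  rewrite E2 //; split.
    by rewrite pmulr_rge0 // subr_ge0.
  by move=> /h2 h; rewrite pmulr_rgt0 // subr_gt0.
have tri i : [\/ c i = 0, 0 < c i | c i < 0].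
  by case: (ltgtP (c i) 0) => h; [constructor 3 | constructor 2 | constructor 1].
case: (pickP (fun p => 0 < c p)) => [p0 cp0 | noP];
case: (pickP (fun q => c q < 0)) => [q0 cq0 | noN].
- have [ps Pps Hps] := @fin_argmax I (fun p => 0 < c p) lo p0 cp0.
  have [qs Pqs Hqs] := @fin_argmax I (fun q => c q < 0) (fun q => - lo q) q0 cq0.
  have [le1 lt1] := P3 ps qs Pps Pqs.
  case: (ltrP (lo ps) (lo qs)) => hlt.
  + exists ((lo ps + lo qs) / 2) => i; case: (tri i) => [ci0|ci|ci]; first by rewrite ci0 mul0r addr0; exact: H0.
    * apply: (goodp _ i ci) => [|_].
        apply: le_trans (Hps i ci) _; apply: ltW; lra.
      apply: le_lt_trans (Hps i ci) _; lra.
    * have := Hqs i ci; rewrite lerN2 => h.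
      apply: (goodq _ i ci) => [|_].
        apply: le_trans h; apply: ltW; lra.
      apply: lt_le_trans h; lra.
  + have eq : lo ps = lo qs by apply/eqP; rewrite eq_le le1.
    exists (lo ps) => i; case: (tri i) => [ci0|ci|ci]; first by rewrite ci0 mul0r addr0; exact: H0.
    * apply: (goodp _ i ci); first exact: Hps.
      by move=> Ji; have [_ /(_ (introT orP (or_introl Ji)))] := P3 i qs ci Pqs; rewrite eq.
    * have := Hqs i ci; rewrite lerN2 => h.
      apply: (goodq _ i ci); first by rewrite eq.
      by move=> Ji; have [_ /(_ (introT orP (or_intror Ji)))] := P3 ps i Pps ci.
- have [ps Pps Hps] := @fin_argmax I (fun p => 0 < c p) lo p0 cp0.
  exists (lo ps + 1) => i; case: (tri i) => [ci0|ci|ci]; first by rewrite ci0 mul0r addr0; exact: H0.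
  + apply: (goodp _ i ci) => [|_].
      apply: le_trans (Hps i ci) _; lra.
    apply: le_lt_trans (Hps i ci) _; lra.
  + by move: (noN i) => /= ; rewrite ci.
- have [qs Pqs Hqs] := @fin_argmax I (fun q => c q < 0) (fun q => - lo q) q0 cq0.
  exists (lo qs - 1) => i; case: (tri i) => [ci0|ci|ci]; first by rewrite ci0 mul0r addr0; exact: H0.
  + by move: (noP i) => /=; rewrite ci.
  + have := Hqs i ci; rewrite lerN2 => h.
    apply: (goodq _ i ci) => [|_].
      apply: le_trans h; lra.
    apply: lt_le_trans h; lra.
- exists 0 => i; case: (tri i) => [ci0|ci|ci]; first by rewrite ci0 mul0r addr0; exact: H0.
  + by move: (noP i) => /=; rewrite ci.
  + by move: (noN i) => /=; rewrite ci.
Qed.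


Definition dotn (d : nat) (v x : nat -> F) := \sum_(k < d) v k * x k.

Lemma motzkin d : forall (I : finType) (v : I -> nat -> F) (J : pred I),
  (exists x : nat -> F, forall i, 0 <= dotn d (v i) x /\ (J i -> 0 < dotn d (v i) x))
  \/ (exists l : I -> F, [/\ forall i, 0 <= l i,
        forall k, (k < d)%N -> \sum_i l i * v i k = 0 &
        exists i, J i /\ 0 < l i]).
Proof.
elim: d => [|d IH] I v J.
  case: (pickP J) => [i0 Ji0 | noJ].
    right; exists (fun j => (j == i0)%:R); split.
    - by move=> j; rewrite ler0n.
    - by [].
    - by exists i0; rewrite eqxx ltr01.
  left; exists (fun _ => 0) => i; rewrite /dotn big_ord0; split => // Ji.
  by rewrite noJ in Ji.
pose c i := v i d.
pose v' (i' : (I + I * I)%type) : nat -> F :=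
  match i' with
  | inl i => if c i == 0 then v i else (fun _ => 0)
  | inr pq => if (0 < c pq.1) && (c pq.2 < 0)
              then (fun k => (- c pq.2) * v pq.1 k + c pq.1 * v pq.2 k)
              else (fun _ => 0)
  end.
pose J' (i' : (I + I * I)%type) : bool :=
  match i' with
  | inl i => (c i == 0) && J i
  | inr pq => [&& 0 < c pq.1, c pq.2 < 0 & J pq.1 || J pq.2]
  end.
have dotS i x : dotn d.+1 (v i) x = dotn d (v i) x + c i * x d.
  by rewrite /dotn big_ord_recr /= mulrC.
case: (IH _ v' J') => [[x Hx] | [l' [l'0 l'sum [i' [Ji' li'0]]]]].
- left.
  pose r i := dotn d (v i) x.
  have [z Hz] : exists z, forall i, 0 <= r i + c i * z /\ (J i -> 0 < r i + c i * z).
    apply: fm_step.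
    + move=> i ci; have := Hx (inl i); rewrite /= ci eqxx /=; case=> h1 h2.
      by split => // Ji; apply: h2.
    + move=> p q cp cq; have := Hx (inr (p, q)); rewrite /= cp cq /=.
      have -> : dotn d (fun k => - c q * v p k + c p * v q k) x = - c q * r p + c p * r q.
        rewrite /dotn /r /dotn !mulr_sumr -big_split /=; apply: eq_bigr => k _; ring.
      by [].
  exists (fun k => if k == d then z else x k) => i.
  rewrite dotS eqxx.
  have -> : dotn d (v i) (fun k => if k == d then z else x k) = r i.
    rewrite /r /dotn; apply: eq_bigr => k _; by rewrite ltn_eqF.
  exact: Hz.
- right.
  pose l i := (if c i == 0 then l' (inl i) else 0)
     + \sum_q (if (0 < c i) && (c q < 0) then l' (inr (i, q)) * (- c q) else 0)
     + \sum_p (if (0 < c p) && (c i < 0) then l' (inr (p, i)) * c p else 0).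
  have l'0' : forall i', 0 <= l' i' := l'0.
  have t1 i : 0 <= (if c i == 0 then l' (inl i) else 0) by case: ifP.
  have t2 i q : 0 <= (if (0 < c i) && (c q < 0) then l' (inr (i, q)) * (- c q) else 0).
    by case: ifP => // /andP [_ cq]; apply: mulr_ge0 => //; rewrite oppr_ge0 ltW.
  have t3 i p : 0 <= (if (0 < c p) && (c i < 0) then l' (inr (p, i)) * c p else 0).
    by case: ifP => // /andP [cp _]; apply: mulr_ge0 => //; rewrite ltW.
  have l0 i : 0 <= l i.
    by rewrite /l !addr_ge0 // sumr_ge0.
  exists l; split => //.
  + have key kk : \sum_i l i * v i kk = \sum_i' l' i' * v' i' kk.
      rewrite big_sumType /=.
      rewrite /l.
      under eq_bigr => i _ do rewrite !mulrDl.
      rewrite !big_split /=.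
      rewrite -addrA; congr (_ + _).
        by apply: eq_bigr => i _; case: ifP => _; rewrite ?mul0r ?mulr0.
      rewrite (eq_bigr (fun p => \sum_q (if (0 < c p) && (c q < 0) then l' (inr (p, q)) * (- c q) * v p kk else 0))); last first.
        by move=> p _; rewrite mulr_suml; apply: eq_bigr => q _; case: ifP; rewrite ?mul0r.
      rewrite [X in _ + X](eq_bigr (fun q => \sum_p (if (0 < c p) && (c q < 0) then l' (inr (p, q)) * c p * v q kk else 0))); last first.
        by move=> q _; rewrite mulr_suml; apply: eq_bigr => p _; case: ifP; rewrite ?mul0r.
      rewrite [X in _ + X]exchange_big /= -big_split /=.
      under eq_bigr => p _ do rewrite -big_split /=.
      rewrite pair_big /=; apply: eq_big => // -[p q] _ /=.
      case: ifP => _; rewrite ?mulr0 ?addr0 //; ring.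
    move=> kk; rewrite ltnS leq_eqVlt => /orP [/eqP -> | kd]; rewrite key; last exact: l'sum.
    apply: big1 => -[i|[p q]] _ /=.
      by case: eqP => [ci|_]; rewrite ?mulr0 // -/(c i) ci mulr0.
    case: ifP => [_|]; rewrite ?mulr0 //.
    rewrite -/(c p) -/(c q); ring.
  + case: i' Ji' li'0 => [i|[p q]] /= Ji' li'0.
      case/andP: Ji' => ci Ji; exists i; split => //.
      apply: lt_le_trans li'0 _; rewrite /l ci -addrA lerDl.
      by apply: addr_ge0; apply: sumr_ge0 => j _; [exact: t2|exact: t3].
    case/and3P: Ji' => cp cq /orP [Jp|Jq].
      exists p; split => //.
      have h : 0 < l' (inr (p, q)) * (- c q) by rewrite mulr_gt0 // oppr_gt0.
      apply: (lt_le_trans h); rewrite /l.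
      have := @sum_ge_term _ (fun q0 => if (0 < c p) && (c q0 < 0) then l' (inr (p, q0)) * - c q0 else 0) q (t2 p).
      rewrite /= cp cq /= => hq.
      apply: (le_trans hq); rewrite -addrA addrC -addrA lerDl.
      by apply: addr_ge0 => //; apply: sumr_ge0 => j _; exact: t3.
    exists q; split => //.
    have h : 0 < l' (inr (p, q)) * c p by rewrite mulr_gt0.
    apply: (lt_le_trans h); rewrite /l.
    have := @sum_ge_term _ (fun p0 => if (0 < c p0) && (c q < 0) then l' (inr (p0, q)) * c p0 else 0) p (t3 q).
    rewrite /= cp cq /= => hp.
    apply: (le_trans hp); rewrite lerDr.
    by apply: addr_ge0 => //; apply: sumr_ge0 => j _; exact: t2.
Qed.

End Motzkin.

Lemma scale_rat (I : finType) (q : I -> rat) :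
  exists (D : int) (z : I -> int), 0 < D /\ forall i, q i * D%:~R = (z i)%:~R.
Proof.
exists (\prod_j denq (q j)).
exists (fun i => numq (q i) * \prod_(j | j != i) denq (q j)); split.
  by apply: prodr_gt0 => j _; exact: denq_gt0.
move=> i; rewrite (bigD1 i) //= rmorphM mulrA -numqE -rmorphM //.
Qed.

Lemma natz_rat (k : nat) : (k%:Z)%:~R = k%:R :> rat.
Proof. by []. Qed.

Section FaceAlt.
Variables (n m : nat) (a : 'I_m -> 'rV[int]_n).

Definition Vq (j : 'I_m) (k : nat) : rat :=
  if (insub k : option 'I_n) is Some i then - (a j 0 i)%:~R
  else if k == n then 1 else 0.

Lemma dot_Vq j x : dotn n.+1 (Vq j) x = x n - \sum_(i < n) (a j 0 i)%:~R * x i.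
Proof.
rewrite /dotn big_ord_recr /= /Vq insubF ?ltnn // eqxx mul1r addrC.
congr (_ + _); rewrite -sumrN; apply: eq_bigr => i _.
by rewrite (_ : insub _ = Some i) ?mulNr // -[X in insub X]/(val i) valK.
Qed.

Lemma Vq_coord j (i : 'I_n) : Vq j i = - (a j 0 i)%:~R.
Proof. by rewrite /Vq (_ : insub _ = Some i) // valK. Qed.

Lemma Vq_last j : Vq j n = 1.
Proof. by rewrite /Vq insubF ?ltnn // eqxx. Qed.

Lemma face_alt (S : pred 'I_m) :
  (exists (w : 'I_n -> int) (h : int), forall j,
      (\sum_i w i * a j 0 i <= h) /\ ((\sum_i w i * a j 0 i == h) = S j))
  \/ (exists al be : 'I_m -> nat,
      [/\ forall j, ~~ S j -> be j = 0%N,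
          exists j, ~~ S j /\ (0 < al j)%N,
          (\sum_j al j = \sum_j be j)%N &
          \sum_j (al j)%:Z *: a j = \sum_j (be j)%:Z *: a j]).
Proof.
pose v (p : ('I_m + 'I_m)%type) : nat -> rat :=
  match p with inl j => Vq j | inr j => if S j then (fun k => - Vq j k) else (fun _ => 0) end.
pose J (p : ('I_m + 'I_m)%type) : bool :=
  match p with inl j => ~~ S j | inr j => false end.
case: (motzkin n.+1 v J) => [[x Hx] | [l [l0 lsum [p0 [Jp lp]]]]].
- left.
  pose g j := x n - \sum_(i < n) (a j 0 i)%:~R * x i.
  have gge j : 0 <= g j /\ (~~ S j -> 0 < g j).
    by have [h1 h2] := Hx (inl j); rewrite /= dot_Vq in h1 h2.
  have geq j : S j -> g j = 0.
    move=> Sj; have [h1 _] := Hx (inr j); move: h1; rewrite /= Sj.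
    have -> : dotn n.+1 (fun k => - Vq j k) x = - dotn n.+1 (Vq j) x.
      by rewrite /dotn -sumrN; apply: eq_bigr => k _; rewrite mulNr.
    rewrite dot_Vq oppr_ge0 => h; apply/eqP; rewrite eq_le h; by case: (gge j).
  have [D [z [D0 Hz]]] := scale_rat (fun k : 'I_n.+1 => x k).
  exists (fun i => z (widen_ord (leqnSn n) i)), (z ord_max) => j.
  have E : (z ord_max - \sum_i z (widen_ord (leqnSn n) i) * a j 0 i)%:~R = D%:~R * g j :> rat.
    rewrite rmorphB rmorph_sum /= -Hz /g mulrBr mulr_sumr; congr (_ - _).
      by rewrite mulrC.
    apply: eq_bigr => i _; rewrite rmorphM /= -Hz /=; ring.
  have Dq : 0 < D%:~R :> rat by rewrite ltr0z.
  have [g0 g1] := gge j.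
  split.
    by rewrite -subr_ge0 -(ler0z rat) E mulr_ge0 // ltW.
  rewrite eq_sym -subr_eq0 -(eqr_int rat) E mulf_eq0 gt_eqF //=.
  case: (boolP (S j)) => Sj; first by rewrite geq // eqxx.
  by rewrite gt_eqF // g1.
- right.
  pose lam j := l (inl j).
  pose rho j := if S j then l (inr j) else 0.
  have coord k : (k < n.+1)%N -> \sum_j lam j * Vq j k = \sum_j rho j * Vq j k.
    move=> /lsum; rewrite big_sumType /= => /eqP; rewrite addr_eq0 => /eqP ->.
    rewrite -sumrN; apply: eq_bigr => j _; rewrite /rho; case: (S j).
      by rewrite mulrN opprK.
    by rewrite mulr0 mul0r oppr0.
  pose f (p : ('I_m + 'I_m)%type) := match p with inl j => lam j | inr j => rho j end.
  have f0 p : 0 <= f p by case: p => j /=; [exact: l0 | rewrite /rho; case: (S j) => //; exact: l0].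
  have [D [z [D0 Hz]]] := scale_rat f.
  have z0 p : (0 <= z p)%R by rewrite -(ler0z rat) -Hz mulr_ge0 // ler0z ltW.
  pose al j := `|z (inl j)|%N.
  pose be j := `|z (inr j)|%N.
  have alE j : (al j)%:R = lam j * D%:~R :> rat.
    by rewrite -natz_rat /al gez0_abs ?z0 // (Hz (inl j)).
  have beE j : (be j)%:R = rho j * D%:~R :> rat.
    by rewrite -natz_rat /be gez0_abs ?z0 // (Hz (inr j)).
  have alZ j : (al j)%:Z = z (inl j) by rewrite /al gez0_abs ?z0.
  have beZ j : (be j)%:Z = z (inr j) by rewrite /be gez0_abs ?z0.
  have Dq : 0 < D%:~R :> rat by rewrite ltr0z.
  exists al, be; split.
  + move=> j Sj; apply/eqP; rewrite -(eqr_nat rat) beE /rho (negbTE Sj) mul0r //.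
  + case: p0 Jp lp => // j /= Sj lj; exists j; split => //.
    by rewrite -(ltr0n rat) alE mulr_gt0.
  + apply/eqP; rewrite -(eqr_nat rat) !natr_sum.
    under eq_bigr => j _ do rewrite alE.
    under [X in _ == X]eq_bigr => j _ do rewrite beE.
    rewrite -!mulr_suml; apply/eqP; congr (_ * _).
    have := coord n (ltnSn n); under eq_bigr => j _ do rewrite Vq_last mulr1.
    by under [X in _ = X -> _]eq_bigr => j _ do rewrite Vq_last mulr1.
  + apply/rowP => i; rewrite !summxE; apply/eqP; rewrite -(eqr_int rat) !rmorph_sum /=.
    under eq_bigr => j _ do rewrite mxE rmorphM /= alZ -Hz.
    under [X in _ == X]eq_bigr => j _ do rewrite mxE rmorphM /= beZ -Hz.
    have E : \sum_j lam j * (a j 0 i)%:~R = \sum_j rho j * (a j 0 i)%:~R.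
      have := coord i (ltn_trans (ltn_ord i) (ltnSn n)).
      rewrite (eq_bigr (fun j => - (lam j * (a j 0 i)%:~R))); last by move=> j _; rewrite Vq_coord mulrN.
      rewrite [X in _ = X -> _](eq_bigr (fun j => - (rho j * (a j 0 i)%:~R))); last by move=> j _; rewrite Vq_coord mulrN.
      by rewrite !sumrN => /oppr_inj.
    rewrite /=.
    apply/eqP; transitivity (D%:~R * \sum_j lam j * (a j 0 i)%:~R).
      rewrite mulr_sumr; apply: eq_bigr => j _ /=; ring.
    rewrite E mulr_sumr; apply: eq_bigr => j _ /=; ring.
Qed.

End FaceAlt.

Local Open Scope classical_set_scope.

Section Mono.
Variables (n m : nat) (a : 'I_m -> 'rV[int]_n).

Definition monoK (K : fieldType) (t : 'I_n -> K) (b : 'rV[int]_n) : K :=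
  \prod_(i < n) t i ^ b 0 i.

Lemma exprz_sum (K : fieldType) (x : K) (I : finType) (f : I -> int) :
  x != 0 -> x ^ (\sum_i f i) = \prod_i x ^ f i.
Proof.
move=> x0; apply: (big_morph (fun z => x ^ z)) => [z1 z2|]; last exact: expr0z.
by apply: exprzDr; rewrite unitfE.
Qed.

Lemma sum_entry (v : 'I_m -> nat) i :
  (\sum_j (v j)%:Z *: a j) 0 i = \sum_j (v j)%:Z * a j 0 i.
Proof. by rewrite summxE; apply: eq_bigr => j _; rewrite mxE. Qed.

Lemma monoK_sum (K : fieldType) (t : 'I_n -> K) (v : 'I_m -> nat) :
  (forall i, t i != 0) ->
  monoK t (\sum_j (v j)%:Z *: a j) = \prod_j monoK t (a j) ^+ v j.
Proof.
move=> t0; rewrite /monoK.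
rewrite (eq_bigr (fun i => \prod_j t i ^ ((v j)%:Z * a j 0 i))); last first.
  move=> i _; rewrite -exprz_sum //; congr (_ ^ _).
  by rewrite summxE; apply: eq_bigr => j _; rewrite mxE.
rewrite exchange_big /=; apply: eq_bigr => j _; rewrite -prodrXl.
apply: eq_bigr => i _; rewrite mulrC -exprz_exp //.
Qed.

Lemma prod_mulX (K : comPzRingType) (x : K) (f : 'I_m -> K) (e : 'I_m -> nat) :
  \prod_j (x * f j) ^+ e j = x ^+ (\sum_j e j) * \prod_j f j ^+ e j.
Proof.
by rewrite (eq_bigr (fun j => x ^+ e j * f j ^+ e j)) ?big_split ?prodrXr //= => j _; rewrite exprMn.
Qed.

End Mono.

Module MP.
Import mpoly.
Section MPS.
Variables (n m : nat) (a : 'I_m -> 'rV[int]_n).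
Lemma inY_binom (R : realType) (y : 'I_m -> R[i]) (al be : 'I_m -> nat) :
  inY a y -> (\sum_j al j = \sum_j be j)%N ->
  \sum_j (al j)%:Z *: a j = \sum_j (be j)%:Z *: a j ->
  \prod_j y j ^+ al j = \prod_j y j ^+ be j.
Proof.
move=> Y sE vE.
pose mal := mpoly.Multinom [tuple al j | j < m].
pose mbe := mpoly.Multinom [tuple be j | j < m].
have ev (z : 'I_m -> R[i]) (e : 'I_m -> nat) :
   mpoly.meval z (mpoly.mpolyX _ (mpoly.Multinom [tuple e j | j < m])) = \prod_j z j ^+ e j.
  by rewrite mpoly.mevalX; apply: eq_bigr => j _; rewrite mpoly.multinomE tnth_mktuple.
have := Y (mpoly.mpolyX R[i] mal - mpoly.mpolyX R[i] mbe).
rewrite mpoly.mevalB !ev => H; apply/eqP; rewrite -subr_eq0; apply/eqP; apply: H.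
move=> u t u0 t0; rewrite mpoly.mevalB !ev.
rewrite (prod_mulX u (fun j => monoK t (a j)) al) (prod_mulX u (fun j => monoK t (a j)) be).
by rewrite -!monoK_sum // vE sE subrr.
Qed.
End MPS.
End MP.
Import MP.

Section Mono2.
Variables (n m : nat) (a : 'I_m -> 'rV[int]_n).

Lemma inY_binomR (R : realType) (y : 'I_m -> R) (al be : 'I_m -> nat) :
  inY a (fun j => (y j)%:C%C) -> (\sum_j al j = \sum_j be j)%N ->
  \sum_j (al j)%:Z *: a j = \sum_j (be j)%:Z *: a j ->
  \prod_j y j ^+ al j = \prod_j y j ^+ be j.
Proof.
move=> Y sE vE; have := inY_binom Y sE vE.
have E (e : 'I_m -> nat) : \prod_j ((y j)%:C)%C ^+ e j = ((\prod_j y j ^+ e j)%:C)%C.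
  by rewrite rmorph_prod; apply: eq_bigr => j _; rewrite rmorphXn.
by rewrite !E => /(congr1 (@complex.Re R)).
Qed.

End Mono2.

Section Geo.
Variables (R : realType) (n m : nat) (a : 'I_m -> 'rV[int]_n).
Local Notation toR := (@toR R n).

Lemma dotR_sum (w : 'rV[R]_n) (I : finType) (l : I -> R) (q : I -> 'rV[R]_n) :
  dotR w (\sum_i l i *: q i) = \sum_i l i * dotR w (q i).
Proof.
rewrite /dotR; under eq_bigr => k _ do rewrite summxE mulr_sumr.
rewrite exchange_big /=; apply: eq_bigr => i _; rewrite mulr_sumr.
by apply: eq_bigr => k _; rewrite mxE; ring.
Qed.

Lemma toR_sum (v : 'I_m -> nat) :
  toR (\sum_j (v j)%:Z *: a j) = \sum_j (v j)%:R *: toR (a j).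
Proof.
apply/rowP => k; rewrite !mxE !summxE rmorph_sum /=.
by apply: eq_bigr => j _; rewrite !mxE rmorphM.
Qed.

Lemma dot_kA (w : 'rV[R]_n) (v : 'I_m -> nat) :
  dotR w (toR (\sum_j (v j)%:Z *: a j)) = \sum_j (v j)%:R * dotR w (toR (a j)).
Proof. by rewrite toR_sum dotR_sum. Qed.

Lemma conv_le (P : set 'rV[R]_n) w h :
  (forall p, P p -> dotR w p <= h) -> forall x, conv P x -> dotR w x <= h.
Proof.
move=> H x [p [q [l [Pq l0 l1 ->]]]]; rewrite dotR_sum.
apply: (@le_trans _ _ (\sum_(i < p) l i * h)).
  by apply: ler_sum => i _; apply: ler_wpM2l => //; apply: H.
by rewrite -mulr_suml l1 mul1r.
Qed.

Lemma conv_self (P : set 'rV[R]_n) p : P p -> conv P p.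
Proof.
move=> Pp; exists 1%N, (fun _ => p), (fun _ => 1); split.
- by [].
- by move=> i; apply: ler01.
- by rewrite big_ord1.
- by rewrite big_ord1 scale1r.
Qed.

Lemma conv_attain (P : set 'rV[R]_n) w h x :
  (forall p, P p -> dotR w p <= h) -> conv P x -> dotR w x = h ->
  exists p, P p /\ dotR w p = h.
Proof.
move=> H cx; case: (pselect (exists p, P p /\ dotR w p = h)) => // no.
move: cx => [p [q [l [Pq l0 l1 ->]]]]; rewrite dotR_sum => E.
have lt i : dotR w (q i) < h.
  rewrite lt_neqAle (H _ (Pq i)) andbT; apply/negP => /eqP e; apply: no; exists (q i); split => //.
have [i li] : exists i, 0 < l i.
  apply: contrapT => nx.
  have : \sum_(i < p) l i = 0.
    apply: big1 => i _; apply/eqP; rewrite eq_le l0 andbT leNgt; apply/negP => li; apply: nx; by exists i.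
  by rewrite l1 => /eqP; rewrite oner_eq0.
have : 0 < \sum_(i < p) l i * (h - dotR w (q i)).
  apply: (@lt_le_trans _ _ (l i * (h - dotR w (q i)))).
    by rewrite mulr_gt0 // subr_gt0.
  rewrite (bigD1 i) //= lerDl; apply: sumr_ge0 => j _.
  by rewrite mulr_ge0 // subr_ge0 ltW.
under eq_bigr => j _ do rewrite mulrBr.
by rewrite sumrB -mulr_suml l1 mul1r E subrr ltxx.
Qed.

Section Face.
Variables (w : 'rV[R]_n) (h : R).
Hypothesis hb : forall j, dotR w (toR (a j)) <= h.

Definition Fw := [set x | conv (toR @` range a) x /\ dotR w x = h].

Lemma sumv_eq (v : 'I_m -> nat) k : (\sum_j v j = k)%N ->
  (\sum_j (v j)%:R * dotR w (toR (a j)) = k%:R * h <->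
   forall j, (0 < v j)%N -> dotR w (toR (a j)) = h).
Proof.
move=> vk.
have E : k%:R * h - \sum_j (v j)%:R * dotR w (toR (a j)) =
         \sum_j (v j)%:R * (h - dotR w (toR (a j))).
  rewrite -vk natr_sum mulr_suml -sumrB; apply: eq_bigr => j _; ring.
have t0 j : 0 <= (v j)%:R * (h - dotR w (toR (a j))) by rewrite mulr_ge0 // subr_ge0.
split.
- move=> H j vj; have : \sum_j (v j)%:R * (h - dotR w (toR (a j))) = 0 by rewrite -E H subrr.
  move/(psumr_eq0P (fun j _ => t0 j)) => /(_ j isT) /eqP.
  by rewrite mulf_eq0 pnatr_eq0 (negbTE (lt0n_neq0 vj)) /= subr_eq0 => /eqP ->.
- move=> H; apply/eqP; rewrite eq_sym -subr_eq0 E; apply/eqP; apply: big1 => j _.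
  by case: (posnP (v j)) => [->|/H ->]; rewrite ?mul0r ?subrr ?mulr0.
Qed.

Lemma Fw_a j : dotR w (toR (a j)) = h -> Fw (toR (a j)).
Proof. by move=> e; split => //; apply: conv_self; exists (a j). Qed.

Lemma kdil_iff (v : 'I_m -> nat) k b : (\sum_j v j = k)%N -> b = \sum_j (v j)%:Z *: a j ->
  (kdil a (toR @^-1` Fw) k b <-> forall j, (0 < v j)%N -> dotR w (toR (a j)) = h).
Proof.
move=> vk bv; split.
- move=> [v' [v'k v'F bv']].
  have e' : \sum_j (v' j)%:R * dotR w (toR (a j)) = k%:R * h.
    by apply/(sumv_eq v'k) => j /v'F [].
  by apply/(sumv_eq vk); rewrite -dot_kA -bv bv' dot_kA.
- move=> H; exists v; split => // j /H; exact: Fw_a.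
Qed.

Lemma dot_iff (v : 'I_m -> nat) k b : (\sum_j v j = k)%N -> b = \sum_j (v j)%:Z *: a j ->
  (dotR w (toR b) = k%:R * h <-> forall j, (0 < v j)%N -> dotR w (toR (a j)) = h).
Proof. by move=> vk ->; rewrite dot_kA; apply: sumv_eq. Qed.

End Face.

Lemma kA_seq_kdil k b : b \in kA_seq a k -> kdil a setT k b.
Proof.
rewrite mem_undup => /mapP [v]; rewrite mem_filter => /andP [/eqP sv _] ->.
by exists (fun j => (v j : nat)); split.
Qed.

Lemma mono_sum (t : 'rV[R]_n) (v : 'I_m -> nat) : (forall i, 0 < t 0 i) ->
  mono (\sum_j (v j)%:Z *: a j) t = \prod_j mono (a j) t ^+ v j.
Proof.
move=> t0; rewrite /mono.
exact: (@monoK_sum n m a R (fun i => t 0 i) v (fun i => lt0r_neq0 (t0 i))).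
Qed.

Lemma mono_gt0 (t : 'rV[R]_n) b : (forall i, 0 < t 0 i) -> 0 < mono b t.
Proof. by move=> t0; rewrite /mono; apply: prodr_gt0 => i _; rewrite exprz_gt0. Qed.

Lemma fhat_face k c v w h u (t : 'rV[R]_n) (y : 'I_m -> R) :
  (forall j, dotR w (toR (a j)) <= h) -> (forall i, 0 < t 0 i) ->
  rep_choice a k v ->
  (forall j, y j = if dotR w (toR (a j)) == h then u * mono (a j) t else 0) ->
  fhat a k c v y = u ^+ k * trunc a k c (kdil a (toR @^-1` Fw w h) k) t.
Proof.
move=> hb t0 rep ye.
rewrite /fhat /trunc mulr_sumr [RHS]big_mkcond /=; apply: eq_big_seq => b /kA_seq_kdil Kb.
have [sv bv] := rep b Kb.
case: (pselect (forall j, (0 < v b j)%N -> dotR w (toR (a j)) = h)) => H.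
- have Kd := (kdil_iff hb sv bv).2 H; rewrite (mem_set Kd).
  rewrite (eq_bigr (fun j => (u * mono (a j) t) ^+ v b j)); last first.
    move=> j _; rewrite ye; case: (posnP (v b j)) => [->|/H ->]; by rewrite ?expr0 ?eqxx.
  rewrite (prod_mulX u (fun j => mono (a j) t)) sv -mono_sum // -bv; ring.
- have Kd : ~ kdil a (toR @^-1` Fw w h) k b by move/(kdil_iff hb sv bv).
  rewrite (memNset Kd).
  move: H => /existsNP [j /not_implyP [vj dj]].
  rewrite (bigD1 j) //= ye; case: eqP => // _.
  by rewrite expr0n (negbTE (lt0n_neq0 vj)) mul0r mulr0.
Qed.

End Geo.

Lemma poly_many_roots (K : numClosedFieldType) (Q : {poly K}) :
  (forall x : K, x != 0 -> Q.[x] = 0) -> Q = 0.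
Proof.
move=> H; apply/eqP; apply: contraT => Q0.
pose rs := [seq (i.+1)%:R : K | i <- iota 0 (size Q)].
have := @max_poly_roots _ Q rs Q0.
rewrite size_map size_iota ltnn; apply.
- apply/allP => x /mapP [i _ ->]; apply/eqP; apply: H; by rewrite pnatr_eq0.
- rewrite map_inj_uniq ?iota_uniq // => i j /eqP; rewrite eqr_nat eqSS => /eqP //.
Qed.

Section ImgY.
Variables (R : realType) (n m : nat) (a : 'I_m -> 'rV[int]_n).

Lemma inY_face (W : 'I_n -> int) (H : int) (t : 'rV[R]_n) :
  (forall j, \sum_i W i * a j 0 i <= H) -> (forall i, 0 < t 0 i) ->
  inY a (fun j => ((if \sum_i W i * a j 0 i == H then mono (a j) t else 0)%:C)%C).
Proof.
move=> HW t0 p Hp.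
pose e j := `|(H - \sum_i W i * a j 0 i)%R|%N.
have eE j : (e j)%:Z = H - \sum_i W i * a j 0 i.
  by rewrite /e gez0_abs // subr_ge0.
pose T j : R[i] := ((mono (a j) t)%:C)%C.
have tC i : ((t 0 i)%:C)%C != 0 :> R[i].
  by rewrite (fmorph_eq0 (real_complex R)) lt0r_neq0.
have TE j : T j = \prod_i ((t 0 i)%:C)%C ^ a j 0 i.
  rewrite /T /mono rmorph_prod; apply: eq_bigr => i _.
  by rewrite rmorphXz // unitfE lt0r_neq0.
have key x : x != 0 -> mpoly.meval (fun j => T j * x ^+ e j) p = 0.
  move=> x0.
  have ux : x \is a GRing.unit by rewrite unitfE.
  have := Hp (x ^ H) (fun i => ((t 0 i)%:C)%C * x ^ (- W i)) (expfz_neq0 _ x0)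
     (fun i => mulf_neq0 (tC i) (expfz_neq0 _ x0)).
  have -> // : (fun j => x ^ H * \prod_(i < n) (((t 0 i)%:C)%C * x ^ (- W i)) ^ a j 0 i)
             = (fun j => T j * x ^+ e j).
  apply: funext => j.
  rewrite (eq_bigr (fun i => ((t 0 i)%:C)%C ^ a j 0 i * x ^ (- W i * a j 0 i))); last first.
    move=> i _; rewrite exprzMl ?unitfE ?expfz_neq0 // exprz_exp //.
  rewrite big_split /= -TE -exprz_sum // mulrCA -exprzDr //; congr (_ * _).
  rewrite -[x ^+ e j]/(x ^ (e j)%:Z) eE; congr (x ^ _).
  by congr (_ + _); rewrite -sumrN; apply: eq_bigr => i _; rewrite mulNr.
pose Q : {poly R[i]} := \sum_(mm <- mpoly.msupp p)
   (mpoly.mcoeff mm p)%:P * \prod_j ((T j)%:P * 'X^(e j)) ^+ (mpoly.fun_of_multinom mm j).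
have QE x : Q.[x] = mpoly.meval (fun j => T j * x ^+ e j) p.
  rewrite mpoly.mevalE horner_sum; apply: eq_bigr => mm _.
  rewrite hornerM hornerC horner_prod; congr (_ * _); apply: eq_bigr => j _.
  by rewrite horner_exp hornerM hornerC hornerXn.
have Q0 : Q = 0 by apply: poly_many_roots => x x0; rewrite QE key.
have := QE 0; rewrite Q0 horner0 => /esym E; rewrite -{}E.
congr (mpoly.meval _ p); apply: funext => j.
rewrite /T expr0n; case: eqP => [Ee|Ne].
  have -> : e j = 0%N by apply/eqP; rewrite -eqz_nat eE Ee subrr.
  by rewrite eqxx mulr1.
have -> : (e j == 0%N) = false.
  apply/negbTE; apply/eqP => ej; apply: Ne; apply/eqP; rewrite eq_sym -subr_eq0 -eE ej //.
by rewrite mulr0.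
Qed.

End ImgY.

Section IntFace.
Variables (R : realType) (n m : nat) (a : 'I_m -> 'rV[int]_n).
Local Notation toR := (@toR R n).

Lemma int_face (w : 'rV[R]_n) (h : R) : (forall j, dotR w (toR (a j)) <= h) ->
  exists (W : 'I_n -> int) (H : int), forall j,
    (\sum_i W i * a j 0 i <= H) /\
    ((\sum_i W i * a j 0 i == H) = (dotR w (toR (a j)) == h)).
Proof.
move=> hb.
case: (face_alt a (fun j => dotR w (toR (a j)) == h)) => // -[al [be [beS [j0 [nS0 al0]] sE vE]]].
exfalso.
have eb : \sum_j (be j)%:R * dotR w (toR (a j)) = (\sum_j be j)%:R * h.
  apply/(sumv_eq hb (erefl _)) => j bj; apply/eqP; apply: contraTT bj => /beS ->//.
have ea : \sum_j (al j)%:R * dotR w (toR (a j)) = (\sum_j al j)%:R * h.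
  by rewrite -dot_kA vE dot_kA eb sE.
have := (sumv_eq hb (erefl _)).1 ea j0 al0; by move/eqP; rewrite (negbTE nS0).
Qed.

End IntFace.

Section LogLin.
Variables (R : realType) (n m : nat) (a : 'I_m -> 'rV[int]_n).

Lemma split_int (b : bool) (z : int) :
  exists al be : nat, (al%:Z - be%:Z = if b then z else 0) /\ (~~ b -> al = 0%N /\ be = 0%N).
Proof.
case: b; last by exists 0%N, 0%N.
case: (lerP 0 z) => hz.
  by exists `|z|%N, 0%N; rewrite gez0_abs // subr0.
by exists 0%N, `|z|%N; rewrite ltz0_abs // sub0r opprK.
Qed.

Lemma loglin (S : pred 'I_m) (c : 'I_m -> R) :
  (forall al be : 'I_m -> nat, (forall j, ~~ S j -> al j = 0%N /\ be j = 0%N) ->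
     (\sum_j al j = \sum_j be j)%N -> \sum_j (al j)%:Z *: a j = \sum_j (be j)%:Z *: a j ->
     \sum_j (al j)%:R * c j = \sum_j (be j)%:R * c j) ->
  exists (x0 : R) (xs : 'I_n -> R), forall j, S j -> c j = x0 + \sum_i (a j 0 i)%:~R * xs i.
Proof.
move=> Hc.
pose BQ : 'M[rat]_(1 + n, m) := col_mx (\row_j (if S j then 1 else 0))
   (\matrix_(i, j) if S j then (a j 0 i)%:~R else 0).
pose B := map_mx (ratr : rat -> R) BQ.
pose cv : 'rV[R]_m := \row_j (if S j then c j else 0).
have sub : (cv <= B)%MS.
  rewrite submxE /B -map_cokermx; apply/eqP/rowP => l; rewrite !mxE.
  have BK := mulmx_coker BQ.
  pose z j := cokermx BQ j l.
  have [D [zz [D0 Hz]]] := scale_rat z.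
  have top : \sum_j (if S j then z j else 0) = 0.
    have := congr1 (fun M : 'M[rat]_(1 + n, m) => M (lshift n 0) l) BK; rewrite !mxE => E; rewrite -[RHS]E.
    by apply: eq_bigr => j _; rewrite col_mxEu mxE; case: (S j); rewrite ?mul1r ?mul0r.
  have bot i : \sum_j (if S j then (a j 0 i)%:~R * z j else 0) = 0.
    have := congr1 (fun M : 'M[rat]_(1 + n, m) => M (rshift 1 i) l) BK; rewrite !mxE => E; rewrite -[RHS]E.
    by apply: eq_bigr => j _; rewrite col_mxEd mxE; case: (S j); rewrite ?mul0r.
  pose al j := if S j && (0 <= zz j) then `|zz j|%N else 0%N.
  pose be j := if S j && (zz j < 0) then `|zz j|%N else 0%N.
  have abE j : (al j)%:Z - (be j)%:Z = if S j then zz j else 0.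
    rewrite /al /be; case: (S j) => //=; case: (lerP 0 (zz j)) => hz /=.
      by rewrite gez0_abs // subr0.
    by rewrite ltz0_abs // sub0r opprK.
  have abS j : ~~ S j -> al j = 0%N /\ be j = 0%N.
    by rewrite /al /be => /negbTE ->.
  have zE j : (if S j then zz j else 0)%:~R = D%:~R * (if S j then z j else 0) :> rat.
    by case: (S j); rewrite ?mulr0 // -Hz mulrC.
  have inj (x y : int) : x%:~R = y%:~R :> rat -> x = y by move/eqP; rewrite eqr_int => /eqP.
  have H1 : (\sum_j al j = \sum_j be j)%N.
    apply/eqP; rewrite -(eqr_nat rat) !natr_sum -subr_eq0 -sumrB.
    rewrite (eq_bigr (fun j => (if S j then zz j else 0)%:~R)); last by move=> j _; rewrite -abE rmorphB /= !natz_rat.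
    by rewrite (eq_bigr _ (fun j _ => zE j)) -mulr_sumr top mulr0.
  have H2 : \sum_j (al j)%:Z *: a j = \sum_j (be j)%:Z *: a j.
    apply/eqP; rewrite -subr_eq0 -sumrB.
    under eq_bigr => j _ do rewrite -scalerBl abE.
    apply/eqP/rowP => i; rewrite summxE mxE; apply: inj; rewrite rmorph_sum /=.
    rewrite (eq_bigr (fun j => D%:~R * (if S j then (a j 0 i)%:~R * z j else 0))).
      by rewrite -mulr_sumr bot mulr0.
    move=> j _; rewrite mxE rmorphM /= zE; case: (S j); rewrite ?mulr0 ?mul0r //; ring.
  have := Hc al be abS H1 H2 => /eqP; rewrite -subr_eq0 -sumrB => /eqP E.
  have E' : \sum_j ((if S j then zz j else 0)%:~R * c j) = 0.
    rewrite -[RHS]E; apply: eq_bigr => j _; rewrite -abE rmorphB /= -mulrBl //.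
  have Dr : (D%:~R : R) != 0 by rewrite intr_eq0 gt_eqF.
  apply/eqP; rewrite -(mulIr_eq0 _ (mulIf Dr)) mulr_suml; apply/eqP.
  rewrite -[RHS]E'; apply: eq_bigr => j _; rewrite mxE.
  case: (S j); last by rewrite !mul0r.
  rewrite mxE -(ratr_int R (zz j)) -Hz rmorphM /= ratr_int; rewrite /z; ring.
case/submxP: sub => X HX.
exists (lsubmx X 0 0), (fun i => rsubmx X 0 i) => j Sj.
have := congr1 (fun M : 'rV[R]_m => M 0 j) HX.
rewrite -[X in X *m _](hsubmxK X) /B map_col_mx mul_row_col /cv !mxE Sj => ->.
rewrite big_ord1 /map_mx !mxE Sj rmorph1 mulr1; congr (_ + _).
by apply: eq_bigr => i _; rewrite !mxE Sj ratr_int mulrC.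
Qed.

End LogLin.

From mathcomp.analysis Require Import sequences exp.

Section Struct.
Variables (R : realType) (n m : nat) (a : 'I_m -> 'rV[int]_n).
Local Notation toR := (@toR R n).

Lemma intrn (k : nat) : ((k%:Z)%:~R : R) = k%:R.
Proof. by []. Qed.

Lemma expR_z (x : R) (z : int) : expR x ^ z = expR (z%:~R * x).
Proof.
case: z => k; first by rewrite intrn expRM_natl.
by rewrite NegzE -exprnN rmorphN /= mulNr expRN intrn expRM_natl.
Qed.

Lemma ln_prodX (y : 'I_m -> R) (e : 'I_m -> nat) :
  (forall j, e j != 0%N -> 0 < y j) ->
  ln (\prod_j y j ^+ e j) = \sum_j (e j)%:R * ln (y j).
Proof.
move=> H.
have : 0 < \prod_j y j ^+ e j /\ ln (\prod_j y j ^+ e j) = \sum_j (e j)%:R * ln (y j).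
  apply: (big_rec2 (fun p s => 0 < p /\ ln p = s)); first by rewrite ltr01 ln1.
  move=> j p s _ [p0 ps].
  case: (eqVneq (e j) 0%N) => [->|ej].
    by rewrite expr0 mul1r mul0r add0r.
  have yj := H j ej.
  rewrite mulr_gt0 ?exprn_gt0 //; split => //.
  by rewrite lnM ?posrE ?exprn_gt0 // lnXn // ps mulr_natl.
by case.
Qed.

Lemma Y_struct (y : 'I_m -> R) : (forall j, 0 <= y j) -> (exists j, y j != 0) ->
  inY a (fun j => ((y j)%:C)%C) ->
  exists (w : 'rV[R]_n) (h u : R) (t : 'rV[R]_n),
    [/\ forall j, dotR w (toR (a j)) <= h, 0 < u, forall i, 0 < t 0 i &
        forall j, y j = if dotR w (toR (a j)) == h then u * mono (a j) t else 0].
Proof.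
move=> y0 [j1 yj1] Yy.
pose S j := y j != 0.
have ypos j : S j -> 0 < y j by rewrite /S => Sj; rewrite lt_neqAle eq_sym Sj y0.
case: (face_alt a S) => [[W [H HWH]] | [al [be [beS [j0 [nS0 al0]] sE vE]]]]; last first.
  exfalso; have := inY_binomR Yy sE vE.
  rewrite (bigD1 j0) //= (eqP (negbNE nS0)) expr0n (negbTE (lt0n_neq0 al0)) mul0r => /esym /eqP.
  apply/negP; rewrite gt_eqF //; apply: prodr_gt0 => j _.
  case: (boolP (S j)) => Sj; first by rewrite exprn_gt0 ?ypos.
  by rewrite beS // expr0 ltr01.
have [x0 [xs Hx]] : exists (x0 : R) (xs : 'I_n -> R),
    forall j, S j -> ln (y j) = x0 + \sum_i (a j 0 i)%:~R * xs i.
  apply: loglin => al be abS sE vE.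
  have := inY_binomR Yy sE vE => /(congr1 (@ln R)).
  rewrite !ln_prodX //.
    by move=> j bj; apply: ypos; apply: contraTT bj => /abS [_ ->].
  by move=> j aj; apply: ypos; apply: contraTT aj => /abS [-> _].
pose w : 'rV[R]_n := \row_i (W i)%:~R.
have dE j : dotR w (toR (a j)) = (\sum_i W i * a j 0 i)%:~R.
  by rewrite rmorph_sum; apply: eq_bigr => i _; rewrite !mxE rmorphM.
exists w, H%:~R, (expR x0), (\row_i expR (xs i)); split.
- by move=> j; rewrite dE ler_int; case: (HWH j).
- exact: expR_gt0.
- by move=> i; rewrite mxE expR_gt0.
- move=> j; rewrite dE eqr_int; have [_ ->] := HWH j.
  case: (boolP (S j)) => Sj; last by apply/eqP; rewrite negbK in Sj.
  rewrite -(lnK (ypos j Sj)) Hx // expRD; congr (_ * _).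
  rewrite /mono expR_sum; apply: eq_bigr => i _.
  by rewrite mxE expR_z.
Qed.

End Struct.

Section Main.
Variables (R : realType) (n m : nat) (a : 'I_m -> 'rV[int]_n).
Local Notation toR := (@toR R n).

Lemma trunc_ext k (c : 'rV[int]_n -> R) (S1 S2 : set 'rV[int]_n) (t : 'rV[R]_n) :
  (forall b, kdil a setT k b -> (S1 b <-> S2 b)) ->
  trunc a k c S1 t = trunc a k c S2 t.
Proof.
move=> H; rewrite /trunc !(big_mkcond (fun b => b \in _)); apply: eq_big_seq => b /kA_seq_kdil Kb.
have [H1 H2] := H b Kb.
have -> : (b \in S1) = (b \in S2).
  by apply/idP/idP => /set_mem h; apply: mem_set; [apply: H1 | apply: H2].
by [].
Qed.

Lemma exists_rep k : exists v, rep_choice a k v.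
Proof.
have : forall b, exists vb : 'I_m -> nat, kdil a setT k b ->
    (\sum_j vb j)%N = k /\ b = \sum_j (vb j)%:Z *: a j.
  move=> b; case: (pselect (kdil a setT k b)) => [[v [vk _ bv]]|nK].
    by exists v.
  by exists (fun _ => 0%N).
by case/choice => v Hv; exists v => b /Hv.
Qed.

Lemma kA_le k w h b : (forall j, dotR w (toR (a j)) <= h) -> kdil a setT k b ->
  dotR w (toR b) <= k%:R * h.
Proof.
move=> hb [v [vk _ ->]]; rewrite dot_kA -vk natr_sum mulr_suml.
by apply: ler_sum => j _; apply: ler_wpM2l => //.
Qed.

Lemma single_kA k j0 : kdil a setT k (k%:Z *: a j0).
Proof.
exists (fun j => if j == j0 then k else 0%N); split => //.
  by rewrite (bigD1 j0) //= eqxx big1 ?addr0 ?addn0 // => j /negbTE ->.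
rewrite (bigD1 j0) //= eqxx big1 ?addr0 // => j /negbTE ->; by rewrite scale0r.
Qed.

Lemma dot_single k w j0 : dotR w (toR (k%:Z *: a j0)) = k%:R * dotR w (toR (a j0)).
Proof.
have -> : k%:Z *: a j0 = \sum_j (if j == j0 then k else 0%N)%:Z *: a j.
  rewrite (bigD1 j0) //= eqxx big1 ?addr0 // => j /negbTE ->; by rewrite scale0r.
rewrite dot_kA (bigD1 j0) //= eqxx big1 ?addr0 // => j /negbTE ->; by rewrite mul0r.
Qed.

Definition P2 k (c : 'rV[int]_n -> R) := strictly_copositive a k c.
Definition P3 k (c : 'rV[int]_n -> R) := forall F, face (conv (toR @` (range a))) F -> F !=set0 ->
          forall t : 'rV[R]_n, (forall i, 0 < t 0 i) ->
            0 < trunc a k c (kdil a (toR @^-1` F) k) t.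
Definition P4 k (c : 'rV[int]_n -> R) := forall G, face (conv (toR @` (kdil a setT k))) G -> G !=set0 ->
          forall t : 'rV[R]_n, (forall i, 0 < t 0 i) ->
            0 < trunc a k c (toR @^-1` G) t.

Lemma range_bound w h : (forall j, dotR w (toR (a j)) <= h) ->
  forall p, (toR @` range a) p -> dotR w p <= h.
Proof. by move=> hb p [_ [j _ <-] <-]. Qed.

Lemma P3_P2 k (c : 'rV[int]_n -> R) : P3 k c -> P2 k c.
Proof.
move=> H3 y y0 ynz Yy v rep.
have [w [h [u [t [hb u0 t0 ye]]]]] := Y_struct y0 ynz Yy.
rewrite (fhat_face c hb t0 rep ye); apply: mulr_gt0; first exact: exprn_gt0.
apply: H3 => //.
- exists w, h; split => //; exact: conv_le (range_bound hb).
- case: ynz => j; rewrite ye; case: (boolP (dotR w (toR (a j)) == h)) => [/eqP e _|_]; last by rewrite eqxx.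
  by exists (toR (a j)); exact: Fw_a.
Qed.

Lemma P2_P3 k (c : 'rV[int]_n -> R) : P2 k c -> P3 k c.
Proof.
move=> H2 F [w [h [hbc ->]]] Fnz t t0.
have hb j : dotR w (toR (a j)) <= h by apply: hbc; apply: conv_self; exists (a j).
pose y j := if dotR w (toR (a j)) == h then 1 * mono (a j) t else 0.
have [v rep] := exists_rep k.
have := fhat_face c hb t0 rep (y := y) (fun j => erefl).
rewrite expr1n mul1r => <-.
apply: H2.
- by move=> j; rewrite /y; case: eqP => _ //; rewrite mul1r ltW // mono_gt0.
- case: Fnz => x [cx dx]; have [p [[_ [j _ <-] <-] dp]] := conv_attain (range_bound hb) cx dx.
  by exists j; rewrite /y dp eqxx mul1r gt_eqF // mono_gt0.
- have [W [H HWH]] := int_face hb.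
  have -> : (fun j => ((y j)%:C)%C) =
            (fun j => ((if \sum_i W i * a j 0 i == H then mono (a j) t else 0)%:C)%C).
    by apply: funext => j; rewrite /y mul1r; have [_ ->] := HWH j.
  by apply: inY_face => // j; case: (HWH j).
- exact: rep.
Qed.

Lemma P3_P4 (m_gt0 : (0 < m)%N) k (c : 'rV[int]_n -> R) : P3 k c -> P4 k c.
Proof.
move=> H3 G [w [h' [hbc ->]]] Gnz t t0.
have [jm _ Hjm] := @fin_argmax R 'I_m predT (fun j => dotR w (toR (a j))) (Ordinal m_gt0) isT.
pose hm := dotR w (toR (a jm)).
have hb j : dotR w (toR (a j)) <= hm by apply: Hjm.
have hbG : forall p, (toR @` kdil a setT k) p -> dotR w p <= h'.
  by move=> p Pp; apply: hbc; apply: conv_self.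
have eh : h' = k%:R * hm.
  apply/eqP; rewrite eq_le; apply/andP; split.
    case: Gnz => x [cx dx]; have [p [[b Kb <-] dp]] := conv_attain hbG cx dx.
    by rewrite -dp; apply: kA_le.
  by rewrite -dot_single; apply: hbG; exists (k%:Z *: a jm) => //; apply: single_kA.
rewrite (@trunc_ext k c _ (kdil a (toR @^-1` Fw a w hm) k)); last first.
  move=> b Kb; case: (Kb) => v [vk _ bv]; split.
    move=> [_ e]; apply/(kdil_iff hb vk bv); apply/(dot_iff hb vk bv); by rewrite -eh.
  move=> /(kdil_iff hb vk bv) /(dot_iff hb vk bv) e; split; last by rewrite eh.
  by apply: conv_self; exists b.
apply: H3 => //.
- exists w, hm; split => //; exact: conv_le (range_bound hb).
- by exists (toR (a jm)); apply: Fw_a.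
Qed.

Lemma P4_P3 k (c : 'rV[int]_n -> R) : P4 k c -> P3 k c.
Proof.
move=> H4 F [w [h [hbc ->]]] Fnz t t0.
have hb j : dotR w (toR (a j)) <= h by apply: hbc; apply: conv_self; exists (a j).
pose G := [set x | conv (toR @` kdil a setT k) x /\ dotR w x = k%:R * h].
rewrite (@trunc_ext k c _ (toR @^-1` G)); last first.
  move=> b Kb; case: (Kb) => v [vk _ bv]; split.
    move=> /(kdil_iff hb vk bv) /(dot_iff hb vk bv) e; split => //.
    by apply: conv_self; exists b.
  move=> [_ e]; apply/(kdil_iff hb vk bv); exact/(dot_iff hb vk bv).
apply: H4 => //.
- exists w, (k%:R * h); split => //.
  by apply: conv_le => p [b Kb <-]; apply: kA_le.
- case: Fnz => x [cx dx]; have [p [[_ [j _ <-] <-] dp]] := conv_attain (range_bound hb) cx dx.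
  exists (toR (k%:Z *: a j)); split; last by rewrite dot_single dp.
  by apply: conv_self; exists (k%:Z *: a j) => //; apply: single_kA.
Qed.

End Main.

Unset Implicit Arguments.

Theorem mainTheorem3 (R : realType) (n m : nat) (a : 'I_m -> 'rV[int]_n)
  (a_inj : injective a) (m_gt0 : (0 < m)%N) (k : nat)
  (c : 'rV[int]_n -> R) (c_supp : forall b, c b != 0 -> kdil a setT k b) :
  [/\ (strictly_copositive a k c <->
       (forall F, face (conv ((@toR R n) @` (range a))) F -> F !=set0 ->
          forall t : 'rV[R]_n, (forall i, 0 < t 0 i) ->
            0 < trunc a k c (kdil a ((@toR R n) @^-1` F) k) t)),
      (strictly_copositive a k c <->
       (forall G, face (conv ((@toR R n) @` (kdil a setT k))) G -> G !=set0 ->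
          forall t : 'rV[R]_n, (forall i, 0 < t 0 i) ->
            0 < trunc a k c ((@toR R n) @^-1` G) t))
    & ((forall F, face (conv ((@toR R n) @` (range a))) F -> F !=set0 ->
          forall t : 'rV[R]_n, (forall i, 0 < t 0 i) ->
            0 < trunc a k c (kdil a ((@toR R n) @^-1` F) k) t) <->
       (forall G, face (conv ((@toR R n) @` (kdil a setT k))) G -> G !=set0 ->
          forall t : 'rV[R]_n, (forall i, 0 < t 0 i) ->
            0 < trunc a k c ((@toR R n) @^-1` G) t))].
Proof.
have e23 := conj (@P2_P3 R n m a k c) (@P3_P2 R n m a k c).
have e34 := conj (@P3_P4 R n m a m_gt0 k c) (@P4_P3 R n m a k c).
split.
- exact: e23.
- by split => H; [apply: e34.1; apply: e23.1 | apply: e23.2; apply: e34.2].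
- exact: e34.
Qed.
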